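(* Let $G$ be a finite simple graph on $n$ vertices such that $\xi(G)=1$, i.e. $G$ has exactly one independent set of size $\alpha(G)$. Then $i_{\alpha(G)-1}\le 3^{\frac{n}{3}}+n-1$, where $i_{\alpha(G)-1}$ is the number of independent sets of size $\alpha(G)-1$ in $G$.
   Context: $\alpha(G)$ is the independence number of $G$ (maximum size of an independent set), $\xi(G)$ is the number of maximum independent sets of $G$, and $i_k$ denotes the number of independent sets of size $k$ in $G$. *)

(* Defs.v *)
From mathcomp Require Import all_boot.
From Stdlib Require Import Reals.
Set Implicit Arguments. Unset Strict Implicit. Unset Printing Implicit Defensive.

Definition simple_graph (T : finType) (e : rel T) : Prop :=
  symmetric e /\ irreflexive e.

Definition independent (T : finType) (e : rel T) (S : {set T}) : bool :=
  [forall x in S, forall y in S, ~~ e x y].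

Definition alpha (T : finType) (e : rel T) : nat :=
  \max_(S : {set T} | independent e S) #|S|.

Definition num_indep (T : finType) (e : rel T) (k : nat) : nat :=
  #|[set S : {set T} | independent e S & #|S| == k]|.

Definition xi (T : finType) (e : rel T) : nat := num_indep e (alpha e).

(* Main.v *)
Require Import Defs.
From mathcomp Require Import all_boot zify.
Set Implicit Arguments. Unset Strict Implicit. Unset Printing Implicit Defensive.

Lemma x3 x : x ^ 3 <= 3 ^ x.
Proof.
elim: x => // x IH.
case: (ltnP x 3) => Hx.
  by case: x IH Hx => [|[|[|]]].
have H : x.+1 ^ 3 <= 3 * x ^ 3 by rewrite !expnS expn0; nia.
apply: (leq_trans H); rewrite [3 ^ x.+1]expnS; exact: leq_mul (leqnn 3) IH.
Qed.

Definition nbh (T : finType) (e : rel T) (U : {set T}) (u : T) : {set T} :=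
  u |: [set x in U | e u x].
Definition maxind (T : finType) (e : rel T) (U I : {set T}) : bool :=
  [&& I \subset U, independent e I & [forall v in U :\: I, exists w in I, e v w]].
Definition MM (T : finType) (e : rel T) (U : {set T}) : nat :=
  #|[set I | maxind e U I]|.

Lemma indepP (T : finType) (e : rel T) (I : {set T}) :
  reflect (forall x y, x \in I -> y \in I -> ~~ e x y) (independent e I).
Proof.
apply: (iffP forall_inP) => H.
  by move=> x y Hx Hy; exact: (forall_inP (H x Hx) y Hy).
by move=> x Hx; apply/forall_inP => y Hy; exact: H.
Qed.

Lemma card_bigcup_le (T I : finType) (A : {pred I}) (B : I -> {set T}) :
  #|\bigcup_(i in A) B i| <= \sum_(i in A) #|B i|.
Proof.
apply: (big_ind2 (fun (X : {set T}) n => is_true (#|X| <= n))).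
- by rewrite cards0.
- move=> X1 n1 X2 n2 h1 h2.
  apply: leq_trans (leq_card_setU X1 X2) _; exact: leq_add.
- by [].
Qed.

Lemma card_nbh (T : finType) (e : rel T) (U : {set T}) (u : T) : irreflexive e ->
  #|nbh e U u| = #|[set x in U | e u x]|.+1.
Proof. by move=> Hirr; rewrite /nbh cardsU1 inE Hirr andbF. Qed.

Lemma nbh_sub (T : finType) (e : rel T) (U : {set T}) (u : T) : u \in U -> nbh e U u \subset U.
Proof.
move=> Hu; apply/subsetP => x; rewrite /nbh !inE => /orP [/eqP -> //|/andP []//].
Qed.

Lemma MM_set0 (T : finType) (e : rel T) (U : {set T}) : U = set0 -> MM e U <= 1.
Proof.
move=> ->; rewrite /MM -(cards1 (@set0 T)); apply: subset_leq_card.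
apply/subsetP => I; rewrite !inE => /and3P [H _ _]; by rewrite subset0 in H.
Qed.

Lemma moon (T : finType) (e : rel T) : simple_graph e ->
  forall k (U : {set T}), #|U| <= k -> (MM e U) ^ 3 <= 3 ^ #|U|.
Proof.
move=> [Hsym Hirr]; elim=> [|k IH] U HU.
  have U0 : U = set0 by apply/eqP; rewrite -cards_eq0; lia.
  have := MM_set0 e U0; rewrite U0 cards0; case: (MM e set0) => [|[]]//.
case: (boolP (U == set0)) => [/eqP U0|/set0Pn [v0 Hv0]].
  have := MM_set0 e U0; rewrite U0 cards0; case: (MM e set0) => [|[]]//.
pose deg w := #|[set x in U | e w x]|.
have [v Hv Hmin] := @arg_minnP T v0 (fun x => x \in U) deg Hv0.
pose N := nbh e U.
have NU : forall u, u \in N v -> u \in U.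
  by move=> u; rewrite /N /nbh !inE => /orP [/eqP ->|/andP []].
have S1 : [set I | maxind e U I] \subset \bigcup_(u in N v) [set I | maxind e U I & u \in I].
  apply/subsetP => I; rewrite inE => HI; apply/bigcupP.
  case: (boolP (v \in I)) => HvI.
    by exists v; [rewrite /N /nbh setU11 | rewrite inE HI HvI].
  move: (HI) => /and3P [HIU HIind /forall_inP Hmax].
  have : v \in U :\: I by rewrite inE HvI Hv.
  move/Hmax => /exists_inP [w HwI Hvw].
  exists w; first by rewrite /N /nbh !inE Hvw (subsetP HIU _ HwI) orbT.
  by rewrite inE HwI HI.
have S2 : forall u, u \in N v ->
    #|[set I | maxind e U I & u \in I]| <= MM e (U :\: N u).
  move=> u Hu.
  rewrite -(card_in_imset (f := fun I => I :\ u)); last first.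
    move=> I J; rewrite !inE => /andP[_ HuI] /andP[_ HuJ] Heq.
    by rewrite -(setD1K HuI) -(setD1K HuJ) Heq.
  apply: subset_leq_card; apply/subsetP => J /imsetP [I HI ->].
  move: HI; rewrite inE => /andP [/and3P [HIU /indepP Hind /forall_inP Hmax] HuI].
  rewrite inE; apply/and3P; split.
  - apply/subsetP => x; rewrite !inE => /andP [Hxu HxI].
    by rewrite (negbTE Hxu) (subsetP HIU _ HxI) (negbTE (Hind u x HuI HxI)).
  - by apply/indepP => x y; rewrite !inE => /andP[_ Hx] /andP[_ Hy]; exact: Hind.
  - apply/forall_inP => x; rewrite /N /nbh !inE negb_or.
    move=> /andP [H1 /andP [/andP [Hxu Hnadj] HxU]].
    have HxI : x \notin I by move: H1; rewrite Hxu.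
    have := Hmax x; rewrite inE HxI HxU => /(_ isT) /exists_inP [w HwI Hxw].
    apply/exists_inP; exists w => //; rewrite !inE HwI andbT.
    apply/eqP => Hwu; subst w; move: Hnadj; by rewrite HxU /= Hsym Hxw.
have S3 : forall u, u \in N v -> #|U :\: N u| = #|U| - #|N u|.
  move=> u Hu; by rewrite cardsD (setIidPr (nbh_sub e (NU u Hu))).
have S3' : forall u, u \in N v -> #|N v| <= #|N u|.
  move=> u Hu; rewrite /N !card_nbh //; exact: Hmin (NU u Hu).
have Nv1 : 0 < #|N v| by rewrite /N card_nbh.
have NvU : #|N v| <= #|U| by apply: subset_leq_card; exact: nbh_sub.
pose m := \max_(u in N v) MM e (U :\: N u).
have Hm : m ^ 3 <= 3 ^ (#|U| - #|N v|).
  apply: (big_ind (fun m => is_true (m ^ 3 <= 3 ^ (#|U| - #|N v|)))).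
  - by rewrite exp0n // expn_gt0.
  - by move=> x y Hx Hy; rewrite /maxn; case: ifP.
  - move=> u Hu.
    have Hc : #|U :\: N u| <= k.
      rewrite S3 //; have := S3' u Hu; lia.
    apply: leq_trans (IH _ Hc) _; apply: leq_pexp2l => //.
    rewrite S3 //; have := S3' u Hu; lia.
have HM : MM e U <= #|N v| * m.
  apply: leq_trans (subset_leq_card S1) _.
  apply: leq_trans (card_bigcup_le _ _) _.
  rewrite -sum_nat_const; apply: leq_sum => u Hu.
  apply: leq_trans (S2 u Hu) _.
  exact: (leq_bigmax_cond (F := fun u => MM e (U :\: N u))).
apply: (@leq_trans ((#|N v| * m) ^ 3)); first by rewrite leq_exp2r.
rewrite expnMn; apply: leq_trans (leq_mul (x3 _) Hm) _.
by rewrite -expnD subnKC.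
Qed.

Lemma indep_add (T : finType) (e : rel T) (I : {set T}) v :
  simple_graph e -> independent e I -> (forall w, w \in I -> ~~ e v w) ->
  independent e (v |: I).
Proof.
move=> [Hsym Hirr] /indepP HI Hv; apply/indepP => x y; rewrite !inE.
case/orP => [/eqP ->|Hx]; case/orP => [/eqP ->|Hy].
- by rewrite Hirr.
- exact: Hv.
- by rewrite Hsym; exact: Hv.
- exact: HI.
Qed.

Lemma main_nat (T : finType) (e : rel T) :
  0 < #|T| -> simple_graph e -> xi e = 1 ->
  num_indep e (alpha e - 1) + 1 <= #|T| + MM e setT.
Proof.
move=> Hn Hg Hxi; have [Hsym Hirr] := Hg.
set a := alpha e.
have Hle : forall I, independent e I -> #|I| <= a.
  by move=> I HI; rewrite /a /alpha; apply: (leq_bigmax_cond (F := fun S : {set T} => #|S|)) HI.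
have /cards1P [S HS] : #|[set S : {set T} | independent e S & #|S| == a]| == 1.
  by move: Hxi; rewrite /xi /num_indep => ->.
have : S \in [set S : {set T} | independent e S & #|S| == a] by rewrite HS set11.
rewrite inE => /andP [HSi /eqP HSa].
have Huniq : forall I, independent e I -> #|I| = a -> I = S.
  move=> I HI HIa; apply/set1P; rewrite -HS inE HI HIa eqxx //.
have Ha1 : 1 <= a.
  move/card_gt0P: Hn => [x _].
  have : independent e [set x].
    by apply/indepP => y z; rewrite !inE => /eqP -> /eqP ->; rewrite Hirr.
  by move/Hle; rewrite cards1.
have HSmax : maxind e setT S.
  rewrite /maxind subsetT HSi /=; apply/forall_inP => v; rewrite !inE andbT => HvS.
  apply: contraT => /exists_inPn Hn'.
  have := Hle _ (indep_add Hg HSi Hn'); rewrite cardsU1 HvS HSa; lia.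
pose A := [set I : {set T} | independent e I & #|I| == a - 1].
pose Ms := [set I | maxind e setT I].
have Hsub : A \subset [set S :\ x | x in S] :|: (Ms :\ S).
  apply/subsetP => I; rewrite inE => /andP [HI /eqP HIa]; rewrite inE.
  case: (boolP (I \subset S)) => HIS.
    apply/orP; left.
    have : #|S :\: I| == 1 by rewrite cardsD (setIidPr HIS) HSa HIa; apply/eqP; lia.
    move/cards1P => [x Hx].
    have HxS : x \in S.
      have : x \in S :\: I by rewrite Hx set11.
      by rewrite inE => /andP [].
    apply/imsetP; exists x => //.
    by rewrite -Hx setDDr setDv set0U (setIidPr HIS).
  apply/orP; right; rewrite !inE; apply/andP; split.
    by apply: contra HIS => /eqP ->.
  rewrite /maxind subsetT HI /=; apply/forall_inP => v; rewrite !inE andbT => HvI.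
  apply: contraT => /exists_inPn Hn'.
  have Hind := indep_add Hg HI Hn'.
  have Hc : #|v |: I| = a by have := Hle _ Hind; rewrite cardsU1 HvI HIa; lia.
  by move: HIS; rewrite -(Huniq _ Hind Hc) subsetUr.
have HMs : #|Ms| = 1 + #|Ms :\ S| by rewrite (cardsD1 S Ms) inE HSmax.
have HSn : #|S| <= #|T| by exact: max_card.
rewrite /num_indep -/A.
have := subset_leq_card Hsub.
have H1 : #|[set S :\ x | x in S] :|: (Ms :\ S)| <= #|[set S :\ x | x in S]| + #|Ms :\ S|.
  exact: leq_card_setU.
have H2 : #|[set S :\ x | x in S]| <= #|S| by exact: leq_imset_card.
rewrite /MM -/Ms HMs. lia.
Qed.

From Stdlib Require Import Reals Lra.

Lemma expn_pow m n : expn m n = Nat.pow m n.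
Proof. elim: n => // n IH. by rewrite expnS IH. Qed.

Lemma cube_le (x y : R) : (0 < y)%R -> (x^3 <= y^3)%R -> (x <= y)%R.
Proof.
intros. destruct (Rle_lt_dec x y) as [|H1]; auto.
assert (x*x + x*y + y*y > 0)%R by nra.
assert ((x-y)*(x*x+x*y+y*y) > 0)%R by nra. nra.
Qed.

Lemma rb (M n : nat) : expn M 3 <= expn 3 n -> (INR M <= Rpower 3 (INR n / 3))%R.
Proof.
move=> H.
have Hy : (0 < Rpower 3 (INR n / 3))%R by rewrite /Rpower; apply: exp_pos.
apply: cube_le => //.
rewrite -(Rpower_pow 3 _ Hy) Rpower_mult.
have -> : (INR n / 3 * INR 3 = INR n)%R by rewrite /=; field.
rewrite Rpower_pow; last lra.
have : (INR (expn M 3) <= INR (expn 3 n))%R by apply: le_INR; apply/leP.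
rewrite !expn_pow !pow_INR => h. have E : INR 3 = 3%R by rewrite /=; ring. by rewrite E in h.
Qed.

Theorem lemma2 (T : finType) (e : rel T) :
  (0 < #|T|)%N ->
  simple_graph e ->
  xi e = 1%N ->
  (INR (num_indep e (alpha e - 1)) <=
     Rpower 3 (INR #|T| / 3) + INR #|T| - 1)%R.
Proof.
move=> Hn Hg Hxi.
have H := main_nat Hn Hg Hxi.
have HM : (INR (MM e setT) <= Rpower 3 (INR #|T| / 3))%R.
  apply: rb; rewrite -cardsT; exact: (moon Hg (leqnn _)).
have : (INR (num_indep e (alpha e - 1) + 1) <= INR (#|T| + MM e setT))%R.
  by apply: le_INR; apply/leP.
rewrite -!plusE !plus_INR /= => h. rewrite ?minusE. move: HM h. set n := INR #|T|. set k := INR (num_indep _ _). move=> HM h. lra.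
Qed.
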